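(* Let $\widehat{\mathbf M}=(\hat{\mathbb X},\hat{\mathbb U},\mathbb Y,\hat x_0,\hat{\mathbf t},\hat h)$ and $\mathbf M=(\mathbb X,\mathbb U,\mathbb Y,x_0,\mathbf t,h)$ be gMDPs with $\widehat{\mathbf M}\preceq^\delta_0\mathbf M$ via relation $\mathcal R$, interface $\mathcal U_v$ and lifted kernel $\mathbb W_{\mathbf t}$, let $\psi$ be an scLTL formula with DFA $\mathcal A_\psi=(Q,q_0,\Sigma,F,\tau)$, and let $\mu:\hat{\mathbb X}\times Q\to\hat{\mathbb U}$ be a mapping. Let $V:\hat{\mathbb X}\times Q\to[0,1]$ and $V_{\|}:\hat{\mathbb X}\times\mathbb X\times Q\to[0,1]$ satisfy $V(\hat x,q)\le V_{\|}(\hat x,x,q)$ for all $(\hat x,x)\in\mathcal R$ and $q\in Q$. Then $$\mathbf T^\mu_\delta(V)(\hat x,q)\le\mathbf T^\mu(V_{\|})(\hat x,x,q)\qquad\forall(\hat x,x)\in\mathcal R,\ q\in Q,$$ where $\mathbf T^\mu_\delta$ is the $\delta$-robust operator with respect to $\widehat{\mathbf M}\otimes\mathcal A_\psi$ and $\mathbf T^\mu$ on the right is the Bellman operator with respect to $(\widehat{\mathbf M}\|_{\mathcal R}\mathbf M)\otimes\mathcal A_\psi$.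
   Context: A gMDP is $(\mathbb X,\mathbb U,\mathbb Y,x_0,\mathbf t,h)$ with Polish state/input spaces, output space $\mathbb Y$ with metric $\mathbf d_{\mathbb Y}$, initial state, stochastic kernel $\mathbf t(\cdot\mid x,u)$ and measurable output map $h$. $\widehat{\mathbf M}\preceq^\delta_\epsilon\mathbf M$ means there exist an interface $\mathcal U_v:\hat{\mathbb U}\times\hat{\mathbb X}\times\mathbb X\to\mathcal P(\mathbb U)$, a measurable relation $\mathcal R\subseteq\hat{\mathbb X}\times\mathbb X$ and a Borel kernel $\mathbb W_{\mathbf t}(\cdot\mid\hat u,\hat x,x)$ on $\hat{\mathbb X}\times\mathbb X$ with $(\hat x_0,x_0)\in\mathcal R$ and, for all $(\hat x,x)\in\mathcal R$: $\mathbf d_{\mathbb Y}(\hat h(\hat x),h(x))\le\epsilon$, and for all $\hat u$, $\mathbb W=\mathbb W_{\mathbf t}(\cdot\mid\hat u,\hat x,x)$ has marginals $\hat{\mathbf t}(\cdot\mid\hat x,\hat u)$ on $\hat{\mathbb X}$ and $\mathbf t(\cdot\mid x,\mathcal U_v(\hat u,\hat x,x))$ on $\mathbb X$, and $\mathbb W(\mathcal R)\ge1-\delta$. The coupling gMDP $\widehat{\mathbf M}\|_{\mathcal R}\mathbf M$ has state space $\hat{\mathbb X}\times\mathbb X$, input space $\hat{\mathbb U}$, initial state $(\hat x_0,x_0)$, kernel $\mathbb W_{\mathbf t}$ and output map $(\hat x,x)\mapsto h(x)$. $\Sigma=2^{\mathsf{AP}}$, $\mathsf L:\mathbb Y\to\Sigma$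 measurable labelling, $\mathcal A_\psi$ a DFA (accepting set $F$, transition $\tau:Q\times\Sigma\to Q$) for $\psi$. For a gMDP $\mathbf N$ with state space $\mathbb Z$, kernel $\mathbf t_{\mathbf N}$ and output map $h_{\mathbf N}$, the product $\mathbf N\otimes\mathcal A_\psi$ has states $\mathbb Z\times Q$ and kernel $\bar{\mathbf t}(dz'\times\{q'\}\mid z,q,u)=\mathbf 1_{\{q'\}}(\tau(q,\mathsf L(h_{\mathbf N}(z'))))\mathbf t_{\mathbf N}(dz'\mid z,u)$; its Bellman operator for an input map $\mu$ is $\mathbf T^\mu(V)(z,q)=\int\max\{\mathbf 1_F(q'),V(z',q')\}\bar{\mathbf t}(dz'\times\{q'\}\mid z,q,\mu)$ (on the coupling, the input $\mu(\hat x,q)$ depends only on the $\hat{\mathbb X}$-component). The $\delta$-robust operator is $\mathbf T^\mu_\delta(V)=\mathbf L(\mathbf T^\mu(V)-\delta)$ with $\mathbf L(r)=\min(1,\max(0,r))$. *)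

(* Defs.v *)
From HB Require Import structures.
From mathcomp Require Import all_boot all_order all_algebra.
From mathcomp Require Import all_classical all_reals all_analysis.
Import Order.TTheory GRing.Theory Num.Theory.
Import numFieldNormedType.Exports.

Set Implicit Arguments.
Unset Strict Implicit.
Unset Printing Implicit Defensive.

Local Open Scope classical_set_scope.
Local Open Scope ring_scope.

Definition is_metric {R : realType} {Y : Type} (d : Y -> Y -> R) : Prop :=
  (forall x y, 0 <= d x y) /\ (forall x y, d x y = 0 <-> x = y) /\
  (forall x y, d x y = d y x) /\ (forall x y z, d x z <= d x y + d y z).

(* measurability of a labelling L : Y -> 2^AP (discrete sigma-algebra on 2^AP) *)
Definition label_measurable {dY} {Y : measurableType dY} {AP : finType}
  (L : Y -> {set AP}) : Prop :=
  forall s : {set AP}, measurable (L @^-1` [set s]).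

(* Bellman operator of the product N (x) A_psi, for a gMDP N with state space Z,
   input space U, kernel tN, output map hN, and input map mu : Z x Q -> U.
   The integral over Z x Q against the product kernel
     tbar(dz' x {q'} | z,q,u) = 1_{q'}(tau(q, L(hN z'))) tN(dz' | z,u)
   is written as an integral over z' of the sum over q' in the finite set Q. *)
Definition bellman {R : realType} {dZ dU dY}
  {Z : measurableType dZ} {U : measurableType dU} {Y : measurableType dY}
  {AP Q : finType}
  (tN : R.-pker (Z * U)%type ~> Z) (hN : Z -> Y) (L : Y -> {set AP})
  (tau : Q -> {set AP} -> Q) (F : {set Q})
  (mu : Z -> Q -> U) (V : Z -> Q -> R) (z : Z) (q : Q) : \bar R :=
  (\int[tN (z, mu z q)]_z'
     (\sum_(q' : Q) ((q' == tau q (L (hN z')))%:R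
                     * Num.max (q' \in F)%:R (V z' q')))%:E)%E.

Definition clip01 {R : realType} (r : \bar R) : \bar R :=
  Order.min 1%E (Order.max 0%E r).

Definition robust_bellman {R : realType} {dZ dU dY}
  {Z : measurableType dZ} {U : measurableType dU} {Y : measurableType dY}
  {AP Q : finType} (delta : R)
  (tN : R.-pker (Z * U)%type ~> Z) (hN : Z -> Y) (L : Y -> {set AP})
  (tau : Q -> {set AP} -> Q) (F : {set Q})
  (mu : Z -> Q -> U) (V : Z -> Q -> R) (z : Z) (q : Q) : \bar R :=
  clip01 (bellman tN hN L tau F mu V z q - delta%:E)%E.

(* Mh <=^delta_eps M  via interface Uv, relation Rel and lifted kernel W.
   W(. | uh, xh, x) is encoded as W ((xh, x), uh). *)
Definition sim_rel {R : realType} {dXh dUh dX dU dY}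
  {Xh : measurableType dXh} {Uh : measurableType dUh}
  {X : measurableType dX} {U : measurableType dU} {Y : measurableType dY}
  (d : Y -> Y -> R) (eps delta : R)
  (xh0 : Xh) (th : R.-pker (Xh * Uh)%type ~> Xh) (hh : Xh -> Y)
  (x0 : X) (t : R.-pker (X * U)%type ~> X) (h : X -> Y)
  (Uv : Uh -> Xh -> X -> probability U R)
  (Rel : set (Xh * X))
  (W : R.-pker ((Xh * X) * Uh)%type ~> (Xh * X)%type) : Prop :=
  measurable Rel /\ Rel (xh0, x0) /\
  forall xh x, Rel (xh, x) ->
    d (hh xh) (h x) <= eps /\
    forall uh : Uh,
      (forall A : set Xh, measurable A ->
         W ((xh, x), uh) (A `*` setT) = th (xh, uh) A) /\
      (forall B : set X, measurable B ->
         W ((xh, x), uh) (setT `*` B) = (\int[Uv uh xh x]_u t (x, u) B)%E) /\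
      ((1 - delta)%:E <= W ((xh, x), uh) Rel)%E.

(* Main.v *)
Require Import Defs.
From HB Require Import structures.
From mathcomp Require Import all_boot all_order all_algebra.
From mathcomp Require Import all_classical all_reals all_analysis.
From mathcomp Require Import measurable_realfun.
From mathcomp Require Import lra.
Import Order.TTheory GRing.Theory Num.Theory.
Import numFieldNormedType.Exports.
Local Open Scope classical_set_scope.
Local Open Scope ring_scope.


Lemma aux_lra (R : realType) (a c delta : R) :
  (1 - delta <= a)%R -> (a + c = 1)%R -> (c <= delta)%R.
Proof. move=> *; lra. Qed.

Lemma sum_pick (R : pzRingType) (Q : finType) (a : Q) (m : Q -> R) :
  (\sum_(q' : Q) ((q' == a)%:R * m q') = m a)%R.
Proof.
rewrite (bigD1 a) //= eqxx mul1r big1 ?addr0 // => i /negbTE ->.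
by rewrite mul0r.
Qed.

Lemma meas_fin (R : realType) d (T : measurableType d) (G : finType)
  (k : T -> G) (Hk : forall g, measurable (k @^-1` [set g]))
  (f : G -> T -> R) (Hf : forall g, measurable_fun setT (f g)) :
  measurable_fun setT (fun x => f (k x) x).
Proof.
have -> : (fun x => f (k x) x) = (fun x => (\sum_(g : G) (\1_(k @^-1` [set g]) x * f g x))%R).
  apply/funext => x; rewrite (bigD1 (k x)) //= indicE mem_set // mul1r.
  rewrite big1 ?addr0 // => g /eqP gk; rewrite indicE memNset ?mul0r //.
  by move=> /= kx; apply: gk.
apply: measurable_sum => g; apply: measurable_realfun.measurable_funM => //.
Qed.
Theorem lemma2 (R : realType) (dXh dUh dX dU dY : measure_display)
  (Xh : measurableType dXh) (Uh : measurableType dUh)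
  (X : measurableType dX) (U : measurableType dU) (Y : measurableType dY)
  (d : Y -> Y -> R) (d_metric : is_metric d)
  (xh0 : Xh) (th : R.-pker (Xh * Uh)%type ~> Xh) (hh : Xh -> Y)
  (hh_meas : measurable_fun setT hh)
  (x0 : X) (t : R.-pker (X * U)%type ~> X) (h : X -> Y)
  (h_meas : measurable_fun setT h)
  (delta : R)
  (Uv : Uh -> Xh -> X -> probability U R)
  (Rel : set (Xh * X))
  (W : R.-pker ((Xh * X) * Uh)%type ~> (Xh * X)%type)
  (Hsim : sim_rel d 0 delta xh0 th hh x0 t h Uv Rel W)
  (AP Q : finType) (L : Y -> {set AP}) (L_meas : label_measurable L)
  (q0 : Q) (F : {set Q}) (tau : Q -> {set AP} -> Q)
  (mu : Xh -> Q -> Uh)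
  (V : Xh -> Q -> R) (Vpar : Xh -> X -> Q -> R)
  (V_range : forall xh q, 0 <= V xh q <= 1)
  (Vpar_range : forall xh x q, 0 <= Vpar xh x q <= 1)
  (V_meas : forall q, measurable_fun setT (fun xh => V xh q))
  (Vpar_meas : forall q, measurable_fun setT (fun z : Xh * X => Vpar z.1 z.2 q))
  (HV : forall xh x q, Rel (xh, x) -> V xh q <= Vpar xh x q) :
  forall xh x q, Rel (xh, x) ->
    (robust_bellman delta th hh L tau F mu V xh q
     <= bellman W (fun z : Xh * X => h z.2) L tau F
          (fun (z : Xh * X) (q : Q) => mu z.1 q)
          (fun (z : Xh * X) (q : Q) => Vpar z.1 z.2 q) (xh, x) q)%E.
Proof.
Proof.
move=> xh x q Rxh.
have [mRel [_ Hs]] := Hsim.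
set u := mu xh q.
pose gh : Xh -> R := fun y => (\sum_(q' : Q) ((q' == tau q (L (hh y)))%:R * Num.max (q' \in F)%:R (V y q')))%R.
pose gc : Xh * X -> R := fun z => (\sum_(q' : Q) ((q' == tau q (L (h z.2)))%:R * Num.max (q' \in F)%:R (Vpar z.1 z.2 q')))%R.
have Egh y : gh y = Num.max (tau q (L (hh y)) \in F)%:R (V y (tau q (L (hh y)))).
  by rewrite /gh sum_pick.
have Egc z : gc z = Num.max (tau q (L (h z.2)) \in F)%:R (Vpar z.1 z.2 (tau q (L (h z.2)))).
  by rewrite /gc sum_pick.
have mgh : measurable_fun setT gh.
  apply: (@meas_fin R _ _ _ (fun y => L (hh y)) _
    (fun s y => (\sum_(q' : Q) ((q' == tau q s)%:R * Num.max (q' \in F)%:R (V y q')))%R)).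
    by move=> s; have := hh_meas measurableT _ (L_meas s); rewrite setTI.
  move=> s; apply: measurable_sum => q'.
  apply: measurable_realfun.measurable_funM; first exact: measurable_cst.
  by apply: measurable_realfun.measurable_maxr; [exact: measurable_cst | exact: V_meas].
have mgc : measurable_fun setT gc.
  apply: (@meas_fin R _ _ _ (fun z : Xh * X => L (h z.2)) _
    (fun s z => (\sum_(q' : Q) ((q' == tau q s)%:R * Num.max (q' \in F)%:R (Vpar z.1 z.2 q')))%R)).
    move=> s; have m1 := h_meas measurableT _ (L_meas s); rewrite setTI in m1.
    by have := (@measurable_snd _ _ Xh X) measurableT _ m1; rewrite setTI.
  move=> s; apply: measurable_sum => q'.
  apply: measurable_realfun.measurable_funM; first exact: measurable_cst.
  by apply: measurable_realfun.measurable_maxr; [exact: measurable_cst | exact: Vpar_meas].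
have gh01 y : (0 <= gh y <= 1)%R.
  rewrite Egh; have /andP[a b] := V_range y (tau q (L (hh y))).
  apply/andP; split; first by rewrite le_max a orbT.
  by rewrite ge_max b andbT; case: (_ \in F).
have gc01 z : (0 <= gc z <= 1)%R.
  rewrite Egc; have /andP[a b] := Vpar_range z.1 z.2 (tau q (L (h z.2))).
  apply/andP; split; first by rewrite le_max a orbT.
  by rewrite ge_max b andbT; case: (_ \in F).
have E1 : (bellman th hh L tau F mu V xh q = \int[W ((xh, x), u)]_z (gh z.1)%:E)%E.
  rewrite /bellman -/u.
  transitivity (\int[pushforward (W ((xh, x), u)) fst]_y (gh y)%:E)%E.
    apply: eq_measure_integral => A mA _.
    rewrite [RHS]/= /pushforward -setXT.
    by have [+ _] := (Hs _ _ Rxh).2 u => ->.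
  rewrite (ge0_integral_pushforward measurable_fst) //.
  - exact/measurable_realfun.measurable_EFinP.
  - by move=> y _; rewrite lee_fin; case/andP: (gh01 y).
have E2 : (bellman W (fun z : Xh * X => h z.2) L tau F
          (fun (z : Xh * X) (q : Q) => mu z.1 q)
          (fun (z : Xh * X) (q : Q) => Vpar z.1 z.2 q) (xh, x) q = \int[W ((xh, x), u)]_z (gc z)%:E)%E.
  by [].
have mgh1 : measurable_fun [set: Xh * X] (EFin \o (gh \o fst)).
  apply/measurable_realfun.measurable_EFinP; exact: (measurableT_comp mgh measurable_fst).
have mgc1 : measurable_fun [set: Xh * X] (EFin \o gc).
  exact/measurable_realfun.measurable_EFinP.
have mind : measurable_fun [set: Xh * X] (EFin \o (\1_(~` Rel) : Xh * X -> R)).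
  by apply/measurable_realfun.measurable_EFinP; apply: measurable_realfun.measurable_indic; exact: measurableC.
have Key : (\int[W ((xh, x), u)]_z (gh z.1)%:E <= \int[W ((xh, x), u)]_z (gc z)%:E + delta%:E)%E.
  apply: (@le_trans _ _ (\int[W ((xh, x), u)]_z ((gc z)%:E + (\1_(~` Rel) z)%:E))%E).
    apply: ge0_le_integral => //.
    - by move=> z _; rewrite lee_fin; case/andP: (gh01 z.1).
    - exact: emeasurable_funD.
    move=> [a b] _; rewrite -EFinD lee_fin indicE.
    have [Rab|nRab] := pselect (Rel (a, b)).
      rewrite memNset ?addr0; last by move=> /= ; apply.
      have [hd _] := Hs a b Rab.
      have [d0 [dP _]] := d_metric.
      have : d (hh a) (h b) = 0%R by apply/eqP; rewrite eq_le hd d0.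
      move/dP => hE.
      rewrite Egh Egc /= hE ge_max !le_max lexx /=.
      by rewrite HV ?orbT.
    rewrite mem_set //.
    case/andP: (gh01 a) => _ h1; case/andP: (gc01 (a, b)) => g0 _.
    by rewrite (le_trans h1) // lerDr.
  rewrite ge0_integralD //; try (by move=> z _; rewrite lee_fin indicE; case: (_ \in _));
    try (by move=> z _; rewrite lee_fin; case/andP: (gc01 z)).
  rewrite integral_indic ?setIT; last exact: measurableC.
  apply: leeD2l.
  have [_ [_ HW]] := (Hs _ _ Rxh).2 u.
  have HU : (W ((xh, x), u) Rel + W ((xh, x), u) (~` Rel) = 1)%E.
    rewrite -measureU //; [|exact: measurableC| by rewrite setICr].
    rewrite setUv; exact: prob_kernel.
  have a0 := measure_ge0 (W ((xh, x), u)) Rel.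
  have c0 := measure_ge0 (W ((xh, x), u)) (~` Rel).
  move: HW HU a0 c0.
  case: (W ((xh, x), u) Rel) => [a| |]; case: (W ((xh, x), u) (~` Rel)) => [c| |] //=.
  move=> ha [hac] _ _; rewrite lee_fin in ha; rewrite lee_fin; exact: aux_lra ha hac.
  exact: measurableT.
rewrite /robust_bellman E1 E2 /clip01.
rewrite ge_min; apply/orP; right.
rewrite ge_max; apply/andP; split.
  by apply: integral_ge0 => z _; rewrite lee_fin; case/andP: (gc01 z).
by rewrite leeBlDr.
Qed.
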